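(* For every positive integer $h$ there exist positive integers $s,r,R$ with $s,r\ge 2$ such that $\delta=(r+1)(R+1)-sr-1=-h$ and $\mathrm{Perf}(s,r,R)=\emptyset$.
   Context: $q$ is a prime power, $\mathbb F_q^{s\times r}$ the set of $s\times r$ matrices over $\mathbb F_q$ with rows in $\mathbb F_q^{1\times r}$. For a row $y=(y_1,\dots,y_r)$, the NRT weight is $w(y)=\max\{j: y_j\neq 0\}$ if $y\ne0$ and $w(0)=0$; for a matrix, $w(x)=\sum_i w(x_i)$. The NRT metric is $d(x,y)=w(x-y)$; $B(c,R)=\{x: d(x,c)\le R\}$. A code $C$ is $R$-perfect if the balls $B(c,R)$, $c\in C$, are pairwise disjoint and cover $\mathbb F_q^{s\times r}$; non-trivial means $|C|>1$ and $C\ne\mathbb F_q^{s\times r}$. $\mathrm{Perf}(s,r,R)$ is the set of non-trivial $R$-perfect codes in $\mathbb F_q^{s\times r}$. *)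

(* Defs.v *)
From mathcomp Require Import all_boot all_order all_algebra all_field.
Set Implicit Arguments. Unset Strict Implicit. Unset Printing Implicit Defensive.
Import GRing.Theory.

(* Matrices in F^{s x r}; columns indexed 0..r-1, i.e. column j has 1-based index j.+1. *)

Definition nrt_row_weight (F : finFieldType) (s r : nat) (x : 'M[F]_(s, r)) (i : 'I_s) : nat :=
  \max_(j < r | x i j != 0%R) j.+1.

Definition nrt_weight (F : finFieldType) (s r : nat) (x : 'M[F]_(s, r)) : nat :=
  \sum_(i < s) nrt_row_weight x i.

Definition nrt_dist (F : finFieldType) (s r : nat) (x y : 'M[F]_(s, r)) : nat :=
  nrt_weight (x - y)%R.

Definition nrt_ball (F : finFieldType) (s r : nat) (c : 'M[F]_(s, r)) (R : nat)
  : {set 'M[F]_(s, r)} := [set x | nrt_dist x c <= R].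

Definition perfect_code (F : finFieldType) (s r R : nat) (C : {set 'M[F]_(s, r)}) : Prop :=
  (forall c1 c2, c1 \in C -> c2 \in C -> c1 != c2 ->
     [disjoint nrt_ball c1 R & nrt_ball c2 R]) /\
  (forall x : 'M[F]_(s, r), exists2 c, c \in C & x \in nrt_ball c R).

Definition nontrivial_code (F : finFieldType) (s r : nat) (C : {set 'M[F]_(s, r)}) : Prop :=
  1 < #|C| /\ C != [set: 'M[F]_(s, r)].

Definition in_Perf (F : finFieldType) (s r R : nat) (C : {set 'M[F]_(s, r)}) : Prop :=
  nontrivial_code C /\ perfect_code R C.

(* Main.v *)
Require Import Defs.
From mathcomp Require Import all_boot all_order all_algebra all_field zify ring.
Import GRing.Theory.
Set Implicit Arguments. Unset Strict Implicit. Unset Printing Implicit Defensive.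

Lemma arith (q P c N : nat) : 2 <= q -> P + 12*q = 10*q^2+3 -> P*c = q^N -> False.
Proof.
move=> q2 HP Hc.
have Pgt : 3 < P by nia.
have key : forall m, 1 < m -> m %| P -> coprime m q -> False.
  move=> m m1 mP cop.
  have mq : m %| q ^ N by rewrite -Hc dvdn_mulr.
  have := coprimeXr N cop; rewrite /coprime => /eqP g1.
  have : m %| gcdn m (q ^ N) by rewrite dvdn_gcd dvdnn mq.
  rewrite g1 dvdn1 => /eqP; lia.
case: (boolP (3 %| q)) => [/dvdnP [k Hk] | n3].
- subst q.
  have [m [Pm Hm]] : exists m, P = m * 3 /\ m + 12 * k = 30*k^2 + 1 by exists (P %/ 3); nia.
  apply: (key m); [lia | by rewrite Pm dvdn_mulr |].
  rewrite /coprime; apply/eqP.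
  set g := gcdn m (k*3).
  have d1 : g %| m by apply: dvdn_gcdl.
  have d2 : g %| k*3 by apply: dvdn_gcdr.
  have e1 : g %| m + 4 * (k*3) by rewrite dvdn_add // dvdn_mull.
  have e2 : g %| 10 * k * (k*3) by rewrite dvdn_mull.
  have e3 : m + 4 * (k*3) = 10 * k * (k*3) + 1 by nia.
  rewrite e3 dvdn_addr // dvdn1 in e1.
  exact/eqP.
- apply: (key P) => //; first lia.
  rewrite /coprime; apply/eqP.
  set g := gcdn P q.
  have d1 : g %| P by apply: dvdn_gcdl.
  have d2 : g %| q by apply: dvdn_gcdr.
  have e1 : g %| P + 12 * q by rewrite dvdn_add // dvdn_mull.
  have e2 : g %| 10 * q * q by rewrite dvdn_mull.
  have e3 : P + 12 * q = 10 * q * q + 3 by nia.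
  rewrite e3 dvdn_addr // in e1.
  have gle : g <= 3 by apply: dvdn_leq.
  clearbody g; clear d1 e3 e2; move: e1 d2 n3 gle; case: g => [|[|[|[|g]]]] //.
  by move=> _ ->.
Qed.
Lemma ball_card (F : finFieldType) s r R (c : 'M[F]_(s,r)) :
  #|nrt_ball c R| = #|nrt_ball (0 : 'M[F]_(s,r)) R|.
Proof.
have -> : nrt_ball c R = [set (y + c)%R | y in nrt_ball 0 R].
  apply/setP => x; apply/idP/imsetP.
  - move=> Hx; exists (x - c)%R; last by rewrite subrK.
    by move: Hx; rewrite !inE /nrt_dist subr0.
  - by case=> y; rewrite !inE /nrt_dist subr0 => Hy ->; rewrite addrK.
by rewrite card_imset //; apply: addIr.
Qed.

Lemma perfect_card (F : finFieldType) s r R (C : {set 'M[F]_(s,r)}) :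
  perfect_code R C -> #|C| * #|nrt_ball (0:'M[F]_(s,r)) R| = #|F| ^ (s * r).
Proof.
case=> Hdis Hcov.
rewrite -card_mx.
have E : forall x : 'M[F]_(s,r), \sum_(c in C) ((x \in nrt_ball c R) : nat) = 1.
  move=> x; have [c0 c0C xc0] := Hcov x.
  rewrite (bigD1 c0) //= xc0 big1 // => c /andP [cC cne].
  have := Hdis c c0 cC c0C cne; rewrite disjoint_sym => /disjointFr.
  by move=> /(_ x xc0) ->.
transitivity (\sum_(x : 'M[F]_(s,r)) \sum_(c in C) ((x \in nrt_ball c R) : nat)); last first.
  by rewrite (eq_bigr (fun _ => 1)) ?sum1_card // => x _; rewrite E.
rewrite exchange_big /= -(sum_nat_const (mem C)).
apply: eq_bigr => c _.
rewrite -(@ball_card _ _ _ _ c) -sum1_card big_mkcond /=.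
by apply: eq_bigr => x _; case: (x \in nrt_ball c R).
Qed.

Definition rw (F : finFieldType) r (y : 'rV[F]_r) : nat := nrt_row_weight y ord0.

Lemma rw_le (F : finFieldType) r (y : 'rV[F]_r) k :
  (rw y <= k) = [forall j : 'I_r, (k <= j) ==> (y ord0 j == 0%R)].
Proof.
apply/bigmax_leqP/forallP => H j.
- apply/implyP => kj; apply/negPn/negP => /H; lia.
- move=> yj; have := H j; rewrite (negbTE yj) implybF -ltnNge; lia.
Qed.

Lemma rows_le0 (F : finFieldType) r : #|[set y : 'rV[F]_r | rw y <= 0]| = 1.
Proof.
suff -> : [set y : 'rV[F]_r | rw y <= 0] = [set 0%R] by rewrite cards1.
apply/setP => y.
rewrite !inE rw_le; apply/forallP/eqP => [H|->] .
- by apply/rowP => j; rewrite mxE; apply/eqP; have := H j.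
- by move=> j; rewrite mxE eqxx implybT.
Qed.

Lemma rows_le1 (F : finFieldType) r : 0 < r -> #|[set y : 'rV[F]_r | rw y <= 1]| = #|F|.
Proof.
move=> r0; set i0 : 'I_r := Ordinal r0.
pose h (a : F) : 'rV[F]_r := (\row_j (if val j == 0%N then a else  0))%R.
have hinj : injective h by move=> a b /rowP /(_ i0); rewrite !mxE.
rewrite -cardsT -(card_imset _ hinj); apply: eq_card => y.
rewrite !inE rw_le; apply/forallP/imsetP => [H|[a _ ->] j].
- exists (y ord0 i0) => //; apply/rowP => j; rewrite !mxE.
  case: eqP => [j0|jn]; first by congr (y _ _); apply: val_inj.
  have jp : (0 < j)%N by rewrite lt0n; apply/eqP.
  by have := H j; rewrite jp /= => /eqP.
- by rewrite /h mxE; apply/implyP; case: j => [[|m] ?] //=.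
Qed.

Lemma rows_le2 (F : finFieldType) r : 1 < r -> #|[set y : 'rV[F]_r | rw y <= 2]| = (#|F| * #|F|)%N.
Proof.
move=> r1; have r0 : 0 < r by lia.
set i0 : 'I_r := Ordinal r0; set i1 : 'I_r := Ordinal r1.
pose h (p : F * F) : 'rV[F]_r := (\row_j (if val j == 0%N then p.1 else if val j == 1%N then p.2 else  0))%R.
have hinj : injective h.
  move=> [a b] [c d] /rowP E; have := E i0; have := E i1; rewrite !mxE /=.
  by move=> -> ->.
rewrite -card_prod -cardsT -(card_imset _ hinj); apply: eq_card => y.
rewrite !inE rw_le; apply/forallP/imsetP => [H|[a _ ->] j].
- exists (y ord0 i0, y ord0 i1) => //; apply/rowP => j; rewrite !mxE /=.
  case: eqP => [j0|jn]; first by congr (y _ _); apply: val_inj.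
  case: eqP => [j1|jn1]; first by congr (y _ _); apply: val_inj.
  have jp : (1 < j)%N by lia.
  by have := H j; rewrite jp /= => /eqP.
- by rewrite /h mxE; apply/implyP; case: j => [[|[|m]] ?] //=.
Qed.

Definition gen (T : finType) (f : T -> nat) : {poly int} := (\sum_t 'X^(f t))%R.

Lemma coef_gen (T : finType) (f : T -> nat) k :
  ((gen f)`_k = (#|[set t | f t == k]|)%:R)%R.
Proof.
rewrite /gen coef_sum -sum1_card natr_sum [RHS]big_mkcond /=.
by apply: eq_bigr => t _; rewrite coefXn inE eq_sym; case: (_ == _).
Qed.

Lemma cum_count (T : finType) (f : T -> nat) K :
  \sum_(k < K.+1) #|[set t | f t == k]| = #|[set t | f t <= K]|.
Proof.
elim: K => [|K IH]; first by rewrite big_ord1; apply: eq_card => t; rewrite !inE leqn0.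
rewrite big_ord_recr /= IH -cardsUI.
have -> : [set t | f t <= K] :&: [set t | f t == K.+1] = set0.
  apply/setP => t; rewrite !inE; apply/negbTE; apply/andP => -[a /eqP b]; lia.
rewrite cards0 addn0; apply: eq_card => t.
rewrite !inE; case: ltngtP => // Hx; lia.
Qed.

Lemma coef2 (p q : {poly int}) :
  [/\ (p * q)`_0 = p`_0 * q`_0, (p * q)`_1 = p`_0 * q`_1 + p`_1 * q`_0
    & (p * q)`_2 = p`_0 * q`_2 + p`_1 * q`_1 + p`_2 * q`_0]%R.
Proof.
by rewrite !coefM !big_ord_recr !big_ord0 /= !add0r.
Qed.

Lemma coef_pow4 (p : {poly int}) : (p`_0 = 1)%R ->
  [/\ (p ^+ 4)`_0 = 1, (p ^+ 4)`_1 = 4 * p`_1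
    & (p ^+ 4)`_2 = 4 * p`_2 + 6 * p`_1 ^+ 2]%R.
Proof.
move=> p0.
have e : (p ^+ 4 = p * (p * (p * p)))%R by rewrite !exprS expr0 mulr1.
have [a0 a1 a2] := coef2 p p.
have [b0 b1 b2] := coef2 p (p * p).
have [c0 c1 c2] := coef2 p (p * (p * p)).
rewrite e c0 c1 c2 b0 b1 b2 a0 a1 a2 p0; split; ring.
Qed.

Lemma row_weightE (F : finFieldType) s r (x : 'M[F]_(s,r)) i :
  nrt_row_weight x i = rw (row i x).
Proof. by rewrite /rw /nrt_row_weight; apply: eq_bigl => j; rewrite mxE. Qed.

Lemma gen_mat (F : finFieldType) s r :
  gen (fun x : 'M[F]_(s,r) => nrt_weight x) = ((gen (@rw F r)) ^+ s)%R.
Proof.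
rewrite /gen -[in RHS](card_ord s) -prodr_const bigA_distr_bigA /=.
pose h (f : {ffun 'I_s -> 'rV[F]_r}) : 'M[F]_(s,r) := (\matrix_(i, j) f i ord0 j)%R.
pose g (x : 'M[F]_(s,r)) : {ffun 'I_s -> 'rV[F]_r} := [ffun i => row i x].
have hK : cancel h g.
  by move=> f; apply/ffunP => i; rewrite ffunE; apply/matrixP => a j; rewrite (ord1 a) !mxE.
have gK : cancel g h.
  by move=> x; apply/matrixP => i j; rewrite !mxE ffunE mxE.
rewrite (reindex h); last by exists g => x _.
apply: eq_bigr => f _.
rewrite /nrt_weight -prodrXr; apply: eq_bigr => i _.
rewrite row_weightE; congr ('X^(rw _))%R.
by apply/matrixP => a j; rewrite (ord1 a) !mxE.
Qed.

Lemma ball_count (F : finFieldType) r : 1 < r ->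
  (#|nrt_ball (0 : 'M[F]_(4,r)) 2| + 12 * #|F| = 10 * #|F| ^ 2 + 3)%N.
Proof.
move=> r1.
have Eb : #|nrt_ball (0 : 'M[F]_(4,r)) 2| = #|[set x : 'M[F]_(4,r) | nrt_weight x <= 2]|.
  by apply: eq_card => x; rewrite !inE /nrt_dist subr0.
set G := gen (@rw F r).
have HQ := gen_mat F 4 r.
have c0 : (G`_0 = 1)%R.
  by rewrite /G coef_gen; have := rows_le0 F r; rewrite -cum_count big_ord1 => ->.
have c01 : (G`_0 + G`_1 = #|F|%:R)%R.
  by rewrite /G !coef_gen -natrD; have := rows_le1 F (ltnW r1); rewrite -cum_count big_ord_recr big_ord1 /= => ->.
have c012 : (G`_0 + G`_1 + G`_2 = (#|F| * #|F|)%:R)%R.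
  by rewrite /G !coef_gen -!natrD; have := rows_le2 F r1; rewrite -cum_count !big_ord_recr big_ord0 /= add0n => ->.
have [d0 d1 d2] := coef_pow4 c0.
have HA : ((#|nrt_ball (0 : 'M[F]_(4,r)) 2|)%:R =
   (gen (fun x : 'M[F]_(4,r) => nrt_weight x))`_0 +
   (gen (fun x : 'M[F]_(4,r) => nrt_weight x))`_1 +
   (gen (fun x : 'M[F]_(4,r) => nrt_weight x))`_2 :> int)%R.
  by rewrite Eb !coef_gen -cum_count !big_ord_recr big_ord0 /= add0n !natrD.
rewrite HQ d0 d1 d2 in HA.
apply/eqP; rewrite -(Num.Theory.eqr_nat int) -[(#|F| ^ 2)%N]/(#|F| * #|F|)%N !natrD !natrM HA.
have e1 : (G`_1 = #|F|%:R - 1 :> int)%R by rewrite -c01 c0; ring.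
have e2 : (G`_2 = (#|F|%:R) ^+ 2 - #|F|%:R :> int)%R by rewrite expr2 -natrM -c012 -c01; ring.
rewrite e1 e2; apply/eqP; ring.
Qed.

Theorem mainTheorem14 (F : finFieldType) (h : nat) : (0 < h)%N ->
  exists s r R : nat,
    [/\ (2 <= s)%N, (2 <= r)%N, (0 < R)%N,
        (((r + 1) * (R + 1))%:Z - (s * r)%:Z - 1 = - (h%:Z))%R
      & forall C : {set 'M[F]_(s, r)}, ~ in_Perf R C].
Proof.
move=> h0; exists 4%N, (h + 2)%N, 2%N; split => //; first lia.
- rewrite -[(h + 2 + 1) * (2 + 1)]/((h + 2 + 1) * (2 + 1))%N; lia.
- move=> C [_ Hp].
  have HC := perfect_card Hp; rewrite mulnC in HC.
  have HB := ball_count F (ltac:(lia) : 1 < h + 2).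
  by apply: (@arith #|F| _ #|C| (4 * (h + 2)) (finNzRing_gt1 F) HB HC).
Qed.
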